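(* Consider SALIQUANT. Then $\mathcal{SG}(0)=0$, and if $n$ is odd, then $\mathcal{SG}(n)=\frac{n-1}{2}$. Moreover, $\mathcal{SG}(n)<n/2$.
   Context: SALIQUANT is the impartial normal-play game on the nonnegative integers where from $n$ a player subtracts a nondivisor of $n$: $\mathrm{opt}(n)=\{n-k: 1\le k\le n,\ k\nmid n\}$; the player unable to move loses. $\mathcal{SG}$ denotes the Sprague-Grundy value (mex rule). *)

(* Defs.v *)
From mathcomp Require Import all_boot.
Set Implicit Arguments. Unset Strict Implicit. Unset Printing Implicit Defensive.

(* SALIQUANT: from n, subtract k with 1 <= k <= n and ~~ (k %| n). *)
Definition opt (n : nat) : seq nat :=
  [seq n - k | k <- iota 1 n & ~~ (k %| n)].

Definition mex (s : seq nat) : nat :=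
  find (fun m => m \notin s) (iota 0 (size s).+1).

(* sgs n = [:: SG 0; SG 1; ...; SG (n-1)], built by the mex rule *)
Fixpoint sgs (n : nat) : seq nat :=
  match n with
  | 0 => [::]
  | n'.+1 => let t := sgs n' in
      rcons t (mex [seq nth 0 t m | m <- opt n'])
  end.

Definition SG (n : nat) : nat := nth 0 (sgs n.+1) n.

(* Main.v *)
Require Import Defs.
From mathcomp Require Import all_boot.
From mathcomp Require Import zify.
Set Implicit Arguments.

Lemma size_sgs n : size (sgs n) = n.
Proof. by elim: n => //= n IH; rewrite size_rcons IH. Qed.

Lemma nth_sgs n i : i < n -> nth 0 (sgs n) i = SG i.
Proof.
elim: n => // n IH Hi; rewrite /SG /=.
rewrite nth_rcons size_sgs.
case: ltnP => Hin; first by rewrite IH.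
have -> : i = n by lia.
by rewrite eqxx nth_rcons size_sgs ltnn eqxx.
Qed.

Lemma opt_lt n m : m \in opt n -> m < n.
Proof.
case/mapP => k; rewrite mem_filter mem_iota => /andP [_ /andP [H1 H2]] ->; lia.
Qed.

Lemma opt_in n m : m < n -> ~~ (n - m %| n) -> m \in opt n.
Proof.
move=> H1 H2; apply/mapP; exists (n - m); last lia.
rewrite mem_filter H2 mem_iota /=; apply/andP; split; lia.
Qed.

Lemma SG_rec n : SG n = mex [seq SG m | m <- opt n].
Proof.
rewrite /SG /= nth_rcons size_sgs ltnn eqxx; congr mex.
by apply/eq_in_map => m /opt_lt; apply: nth_sgs.
Qed.

Lemma mex_has s : has (fun m => m \notin s) (iota 0 (size s).+1).
Proof.
apply/negPn/negP => /hasPn H.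
have : {subset iota 0 (size s).+1 <= s} by move=> x /H; rewrite negbK.
move/(uniq_leq_size (iota_uniq 0 _)); rewrite size_iota ltnn //.
Qed.

Lemma mex_notin s : mex s \notin s.
Proof.
have H := mex_has s.
have Hf : find (fun m => m \notin s) (iota 0 (size s).+1) < (size s).+1.
  by rewrite -{2}(size_iota 0 (size s).+1) -has_find.
by have := nth_find 0 H; rewrite /mex nth_iota ?add0n.
Qed.

Lemma mex_in s w : w < mex s -> w \in s.
Proof.
move=> Hw; have := before_find 0 Hw; rewrite /mex in Hw *.
have Hf : find (fun m => m \notin s) (iota 0 (size s).+1) < (size s).+1.
  by rewrite -{2}(size_iota 0 (size s).+1) -has_find mex_has.
rewrite nth_iota ?add0n; last lia.
by move/negPn.
Qed.

Lemma SG_bound n : 0 < n -> (SG n).*2 < n.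
Proof.
elim/ltn_ind: n => n IH Hn.
rewrite ltnNge; apply/negP => Hge.
set t := (n.+1)./2.-1.
have Ht : t < SG n by rewrite /t; lia.
move: (Ht); rewrite SG_rec => /mex_in /mapP [m Hm Et].
have Hmn := opt_lt _ _ Hm.
have Hm0 : m != 0.
  apply/negP => /eqP E; move: Hm; rewrite E; move/mapP => [k].
  rewrite mem_filter mem_iota => /andP [Hd /andP [H1 H2]] Ek.
  have : k = n by lia.
  by move=> Ekn; rewrite Ekn dvdnn in Hd.
have Hm1 : m != n.-1.
  apply/negP => /eqP E; move: Hm; rewrite E; move/mapP => [k].
  rewrite mem_filter mem_iota => /andP [Hd /andP [H1 H2]] Ek.
  have : k = 1 by lia.
  by move=> Ekn; rewrite Ekn dvd1n in Hd.
have := IH m Hmn ltac:(by rewrite lt0n); rewrite -Et /t; lia.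
Qed.

Theorem mainTheorem5 :
  SG 0 = 0 /\
  (forall n : nat, odd n -> SG n = n.-1./2) /\
  (forall n : nat, 0 < n -> (SG n).*2 < n).
Proof.
split; first by [].
split; last exact: SG_bound.
elim/ltn_ind => n IH Hodd.
have Hn : 0 < n by case: n Hodd {IH}.
have Hb := SG_bound _ Hn.
apply/eqP; rewrite eqn_leq; apply/andP; split; first lia.
rewrite leqNgt; apply/negP => Hlt.
have Hw : (SG n) \in [seq SG m | m <- opt n].
  apply/mapP; exists (SG n).*2.+1; last first.
    rewrite (IH (SG n).*2.+1) /=; [lia | lia | by rewrite odd_double].
  apply: opt_in; first lia.
  apply/negP => Hd.
  have Hodd2 : ~~ odd (n - (SG n).*2.+1).
    by rewrite oddB ?Hodd /= ?odd_double //; lia.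
  move: (dvdn_odd Hd Hodd); rewrite (negbTE Hodd2) //.
by move: (mex_notin [seq SG m | m <- opt n]); rewrite -SG_rec Hw.
Qed.
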